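(* Let $\omega$ be a rectilinearly-convex obstacle that does not have a diagonal. If $\omega$ has a cross $X$, then $X$ is a minimum skeleton for $\omega$.
   Context: An obstacle $\omega$ is a simple polygon in $\mathbb{R}^2$ (a closed, bounded polygonal region without holes whose boundary does not intersect itself), assumed in general position (no three of its vertices are collinear); vertices and edges of $\omega$ are those of its boundary. $\omega$ is rectilinear if each edge is horizontal or vertical, and a rectilinear obstacle is rectilinearly-convex if any two points of $\omega$ can be joined by a shortest rectilinear path (made of horizontal and vertical segments, of minimum $\ell_1$ length) contained in $\omega$. A corner point of a rectilinear path is a point where a horizontal and a vertical segment of the path meet. A set $S$ of closed line segments is inside $\omega$ if the union of its elements is contained in $\omega$. Such an $S$ is a skeleton for $\omega$ if for every pair of points $p,q$ not in the interior of $\omega$ such that every shortest rectilinear path between $p$ and $q$ with at most one corner point meets the interior of $\omega$, each such path intersects some element of $S$; a minimum skeleton is one with the fewest segments. $B(\omega)$ is the smallest closed axis-parallel rectangle containing $\omega$; the extreme edges are the edges of $\omega$ lying on the boundary of $B(\omega)$ (exactly four: left, right, bottom, top); an extreme corner is a vertex of $\omega$ that is a common endpoint of two extreme edges. A diagonal of $\omega$ is a line segment contained in $\omega$ joining two diagonally opposite extreme corners. A cross of $\omega$ is a pair $\{s_H,s_V\}$ of line segments contained in $\omega$, where $s_H$ has one endpoint on each of the two horizontal extreme edges and $s_V$ has one endpoint on each of the two vertical extreme edges. *)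

(* Defs.v *)
From HB Require Import structures.
From mathcomp Require Import all_boot all_order all_algebra.
From mathcomp Require Import reals.
Set Implicit Arguments. Unset Strict Implicit. Unset Printing Implicit Defensive.
Import Order.TTheory GRing.Theory Num.Theory.
Local Open Scope ring_scope.

Section Plane.
Variable R : realType.

Definition pt := (R * R)%type.
Definition region := pt -> Prop.

Definition l1 (p q : pt) : R := `|p.1 - q.1| + `|p.2 - q.2|.

Definition seg (a b : pt) : region := fun x =>
  exists t : R, 0 <= t <= 1 /\
    x = ((1 - t) * a.1 + t * b.1, (1 - t) * a.2 + t * b.2).

Definition ball (p : pt) (e : R) : region := fun q =>
  (q.1 - p.1) ^+ 2 + (q.2 - p.2) ^+ 2 < e ^+ 2.

Definition interior (w : region) : region := fun p =>
  exists2 e : R, 0 < e & forall q, ball p e q -> w q.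
Definition boundary (w : region) : region := fun p =>
  forall e : R, 0 < e ->
    (exists q, ball p e q /\ w q) /\ (exists q, ball p e q /\ ~ w q).
Definition closed (w : region) : Prop :=
  forall p, (forall e : R, 0 < e -> exists q, ball p e q /\ w q) -> w p.
Definition bounded (w : region) : Prop :=
  exists M : R, forall p, w p -> `|p.1| <= M /\ `|p.2| <= M.

Definition vtx (vs : seq pt) (i : nat) : pt := nth (0, 0) vs (i %% size vs).
Definition edge (vs : seq pt) (i : nat) : region := seg (vtx vs i) (vtx vs i.+1).
Definition on_polygon (vs : seq pt) : region := fun x =>
  exists2 i, (i < size vs)%N & edge vs i x.

Definition simple_polygon (vs : seq pt) : Prop :=
  (3 <= size vs)%N /\
  (forall i j, (i < size vs)%N -> (j < size vs)%N -> i <> j -> vtx vs i <> vtx vs j) /\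
  (forall i j x, (i < size vs)%N -> (j < size vs)%N -> i <> j ->
     edge vs i x -> edge vs j x ->
     (j = (i.+1 %% size vs)%N /\ x = vtx vs j) \/
     (i = (j.+1 %% size vs)%N /\ x = vtx vs i)).

Definition collinear (a b c : pt) : Prop :=
  (b.1 - a.1) * (c.2 - a.2) - (b.2 - a.2) * (c.1 - a.1) = 0.

Definition general_position (vs : seq pt) : Prop :=
  forall i j k, (i < size vs)%N -> (j < size vs)%N -> (k < size vs)%N ->
    i <> j -> j <> k -> i <> k -> ~ collinear (vtx vs i) (vtx vs j) (vtx vs k).

(* An obstacle: the closed bounded region w (with nonempty interior)
   whose topological boundary is the simple polygon with vertices vs
   in general position; i.e. w is the closed region enclosed by vs. *)
Definition obstacle (w : region) (vs : seq pt) : Prop :=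
  simple_polygon vs /\ general_position vs /\
  closed w /\ bounded w /\ (exists p, interior w p) /\
  (forall p, boundary w p <-> on_polygon vs p).

Definition rectilinear (vs : seq pt) : Prop :=
  forall i, (i < size vs)%N ->
    (vtx vs i).1 = (vtx vs i.+1).1 \/ (vtx vs i).2 = (vtx vs i.+1).2.

(* ---- rectilinear paths: start point p followed by the list ps of
   successive breakpoints; each piece is horizontal or vertical ---- *)
Fixpoint axis_chain (p : pt) (ps : seq pt) : Prop :=
  match ps with
  | [::] => True
  | x :: t => (p.1 = x.1 \/ p.2 = x.2) /\ axis_chain x t
  end.
Fixpoint plen (p : pt) (ps : seq pt) : R :=
  match ps with
  | [::] => 0
  | x :: t => l1 p x + plen x t
  end.
Fixpoint ptrace (p : pt) (ps : seq pt) : region :=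
  match ps with
  | [::] => fun x => x = p
  | y :: t => fun x => seg p y x \/ ptrace y t x
  end.

Definition shortest_rpath (p : pt) (ps : seq pt) : Prop :=
  axis_chain p ps /\
  forall ps', axis_chain p ps' -> last p ps' = last p ps -> plen p ps <= plen p ps'.

Definition rect_convex (w : region) : Prop :=
  forall a b, w a -> w b -> exists ps,
    last a ps = b /\ shortest_rpath a ps /\ (forall x, ptrace a ps x -> w x).

(* shortest rectilinear path from p to q with at most one corner point:
   two axis-parallel pieces p -> c -> q (possibly degenerate) *)
Definition one_corner_path (p q c : pt) : Prop := shortest_rpath p [:: c; q].
Definition oc_trace (p q c : pt) : region := ptrace p [:: c; q].

Definition inside (w : region) (S : seq (pt * pt)) : Prop :=
  forall s, s \in S -> forall x, seg s.1 s.2 x -> w x.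

Definition skeleton (w : region) (S : seq (pt * pt)) : Prop :=
  (forall s, s \in S -> s.1 <> s.2) /\ inside w S /\
  forall p q, ~ interior w p -> ~ interior w q ->
    (forall c, one_corner_path p q c ->
       exists x, oc_trace p q c x /\ interior w x) ->
    forall c, one_corner_path p q c ->
      exists s, s \in S /\ exists x, oc_trace p q c x /\ seg s.1 s.2 x.

Definition min_skeleton (w : region) (S : seq (pt * pt)) : Prop :=
  skeleton w S /\ forall S', skeleton w S' -> (size S <= size S')%N.

Definition min_x (w : region) (p : pt) := forall q, w q -> p.1 <= q.1.
Definition max_x (w : region) (p : pt) := forall q, w q -> q.1 <= p.1.
Definition min_y (w : region) (p : pt) := forall q, w q -> p.2 <= q.2.
Definition max_y (w : region) (p : pt) := forall q, w q -> q.2 <= p.2.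

Definition side_edge (P : pt -> Prop) (vs : seq pt) (i : nat) : Prop :=
  (i < size vs)%N /\ P (vtx vs i) /\ P (vtx vs i.+1).
Definition left_edge w vs i := side_edge (min_x w) vs i.
Definition right_edge w vs i := side_edge (max_x w) vs i.
Definition bottom_edge w vs i := side_edge (min_y w) vs i.
Definition top_edge w vs i := side_edge (max_y w) vs i.

Definition endpoint_of (vs : seq pt) (i : nat) (a : pt) : Prop :=
  a = vtx vs i \/ a = vtx vs i.+1.

Definition corner_of (E1 E2 : nat -> Prop) (vs : seq pt) (a : pt) : Prop :=
  (exists i, E1 i /\ endpoint_of vs i a) /\ (exists j, E2 j /\ endpoint_of vs j a).

Definition has_diagonal (w : region) (vs : seq pt) : Prop :=
  exists a b,
    ((corner_of (bottom_edge w vs) (left_edge w vs) vs a /\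
      corner_of (top_edge w vs) (right_edge w vs) vs b) \/
     (corner_of (top_edge w vs) (left_edge w vs) vs a /\
      corner_of (bottom_edge w vs) (right_edge w vs) vs b)) /\
    (forall x, seg a b x -> w x).

Definition joins (E1 E2 : nat -> Prop) (vs : seq pt) (s : pt * pt) : Prop :=
  exists i j, E1 i /\ E2 j /\
    ((edge vs i s.1 /\ edge vs j s.2) \/ (edge vs i s.2 /\ edge vs j s.1)).

Definition is_cross (w : region) (vs : seq pt) (sH sV : pt * pt) : Prop :=
  (forall x, seg sH.1 sH.2 x -> w x) /\ (forall x, seg sV.1 sV.2 x -> w x) /\
  joins (bottom_edge w vs) (top_edge w vs) vs sH /\
  joins (left_edge w vs) (right_edge w vs) vs sV.

End Plane.

(* Main.v *)
Require Import Defs.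
From mathcomp Require Import all_boot all_order all_algebra.
From mathcomp Require Import reals.
From mathcomp Require Import lra ring zify.
From Stdlib Require Import Classical_Prop.
Set Implicit Arguments. Unset Strict Implicit. Unset Printing Implicit Defensive.
Import Order.TTheory GRing.Theory Num.Theory.
Local Open Scope ring_scope.

Section Geo.
Variable R : realType.
Implicit Types (p q a b c x y z u : pt R) (w : region R).

Definition sw (p : pt R) : pt R := (p.2, p.1).
Lemma swK p : sw (sw p) = p. Proof. by case: p. Qed.

Lemma pos2 (a b : R) : 0 < a -> 0 < b -> exists2 e, 0 < e & e <= a /\ e <= b.
Proof.
move=> ha hb; case: (lerP a b) => h.
- by exists a => //; split.
- by exists b => //; split => //; apply: ltW.
Qed.

Lemma abs_cases (x : R) : (`|x| = x /\ 0 <= x) \/ (`|x| = - x /\ x < 0).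
Proof.
case: (lerP 0 x) => h; [left; split=> //; exact: ger0_norm | right; split=> //; exact: ltr0_norm].
Qed.

Lemma seg_sw a b x : seg (sw a) (sw b) (sw x) <-> seg a b x.
Proof.
case: a b x => [a1 a2] [b1 b2] [x1 x2]; rewrite /seg /sw /=; split.
- by case=> t [ht [-> ->]]; exists t.
- by case=> t [ht [-> ->]]; exists t.
Qed.

Lemma seg_swE a b x : seg (sw a) (sw b) x <-> seg a b (sw x).
Proof. by rewrite -{1}(swK x) seg_sw. Qed.

Lemma seg_sym a b x : seg a b x -> seg b a x.
Proof.
case=> t [/andP [h0 h1] ->]; exists (1 - t); split.
  by apply/andP; split; lra.
by congr pair; ring.
Qed.

Lemma seg_mk a b (t : R) : 0 <= t <= 1 ->
  seg a b ((1 - t) * a.1 + t * b.1, (1 - t) * a.2 + t * b.2).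
Proof. by move=> ht; exists t. Qed.

Lemma seg_l a b : seg a b a.
Proof. exists 0; split; first by rewrite lexx ler01. by case: a => ? ? /=; congr pair; ring. Qed.
Lemma seg_r a b : seg a b b.
Proof. exists 1; split; first by rewrite lexx ler01. by case: b => ? ? /=; congr pair; ring. Qed.

Lemma seg_hP a b x : a.2 = b.2 ->
  seg a b x <-> x.2 = a.2 /\ ((a.1 <= x.1 <= b.1) \/ (b.1 <= x.1 <= a.1)).
Proof.
case: a b x => [a1 a2] [b1 b2] [x1 x2] /= e; subst b2; split.
- case=> t [/andP [h0 h1] [-> ->]]; split; first by ring.
  case: (lerP a1 b1) => hab; [left|right]; apply/andP; split; nra.
- case=> -> hx.
  have [eab|nab] := eqVneq a1 b1.
    subst b1; have -> : x1 = a1 by case: hx => /andP [? ?]; lra.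
    by apply: seg_l.
  have hd : b1 - a1 != 0 by rewrite subr_eq0 eq_sym.
  exists ((x1 - a1) / (b1 - a1)); split.
    case: hx => /andP [h1 h2].
    + have hp : 0 < b1 - a1 by rewrite lt_neqAle eq_sym hd /=; lra.
      apply/andP; split; first by apply: divr_ge0; lra.
      by rewrite ler_pdivrMr // mul1r; lra.
    + have hp : b1 - a1 < 0 by rewrite lt_neqAle hd /=; lra.
      apply/andP; split.
        by rewrite -mulrNN; apply: mulr_ge0; [lra| rewrite -invrN invr_ge0; lra].
      by rewrite ler_ndivrMr // mul1r; lra.
  rewrite /=; congr pair; first by field.
  by ring.
Qed.

Lemma seg_vP a b x : a.1 = b.1 ->
  seg a b x <-> x.1 = a.1 /\ ((a.2 <= x.2 <= b.2) \/ (b.2 <= x.2 <= a.2)).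
Proof.
move=> e; rewrite -seg_sw; rewrite seg_hP //.
Qed.


Lemma l1_tri a b c : l1 a c <= l1 a b + l1 b c.
Proof.
rewrite /l1; have h1 := ler_distD b.1 a.1 c.1; have h2 := ler_distD b.2 a.2 c.2; lra.
Qed.

Lemma plen_ge p ps : l1 p (last p ps) <= plen p ps.
Proof.
elim: ps p => [|y t IH] p /=.
  by rewrite /l1 !subrr normr0 addr0.
apply: le_trans (l1_tri p y (last y t)) _; have := IH y; lra.
Qed.

Lemma l1_ge0 a b : 0 <= l1 a b.
Proof. by rewrite /l1 addr_ge0. Qed.

Lemma seg_pt a x : seg a a x -> x = a.
Proof.
case=> t [_ ->]; case: a => a1 a2 /=; congr pair; ring.
Qed.

Definition bet (a x b : R) := (a <= x <= b) \/ (b <= x <= a).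

Lemma bet_split (a y b x : R) : bet a y b -> bet a x b -> bet a x y \/ bet y x b.
Proof.
rewrite /bet; case: (lerP x y) => h5.
- case=> /andP [h1 h2]; case=> /andP [h3 h4].
  + by left; left; apply/andP; split.
  + have -> : x = y by lra. by right; left; apply/andP; split; lra.
  + have -> : x = y by lra. by right; left; apply/andP; split; lra.
  + by right; right; apply/andP; split; lra.
- case=> /andP [h1 h2]; case=> /andP [h3 h4].
  + by right; left; apply/andP; split; lra.
  + have -> : x = y by lra. by right; left; apply/andP; split; lra.
  + have -> : x = y by lra. by right; left; apply/andP; split; lra.
  + by left; right; apply/andP; split; lra.
Qed.

Lemma abs_bet (a y b : R) : `|a - y| + `|y - b| <= `|a - b| -> bet a y b.
Proof.
rewrite /bet => h.
have := abs_cases (a - y); have := abs_cases (y - b); have := abs_cases (a - b).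
case=> [[e1 s1]|[e1 s1]]; case=> [[e3 s3]|[e3 s3]]; case=> [[e4 s4]|[e4 s4]];
rewrite ?e1 ?e3 ?e4 in h; first [right; apply/andP; split; lra | left; apply/andP; split; lra].
Qed.

Lemma bet_abs (a y b : R) : bet a y b -> `|a - b| = `|a - y| + `|y - b|.
Proof.
rewrite /bet => h.
have := abs_cases (a - y); have := abs_cases (y - b); have := abs_cases (a - b).
case=> [[e1 s1]|[e1 s1]]; case=> [[e3 s3]|[e3 s3]]; case=> [[e4 s4]|[e4 s4]];
rewrite ?e1 ?e3 ?e4; case: h => /andP [? ?]; lra.
Qed.

Lemma abs0 (x y : R) : `|x| + `|y| <= 0 -> x = 0.
Proof.
move=> h; have h1 := normr_ge0 x; have h2 := normr_ge0 y.
by apply/normr0_eq0; lra.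
Qed.

Lemma seg_hP' a b x : a.2 = b.2 -> seg a b x <-> x.2 = a.2 /\ bet a.1 x.1 b.1.
Proof. exact: seg_hP. Qed.

Lemma ortho_key ps a b : axis_chain a ps -> last a ps = b -> a.2 = b.2 ->
  plen a ps <= l1 a b -> forall x, seg a b x -> ptrace a ps x.
Proof.
elim: ps a => [|y t IH] a /=.
  by move=> _ <- _ _ x /seg_pt.
case=> hay hch hl e2 hle x hx.
have hge := plen_ge y t; rewrite hl in hge.
move: hle; rewrite /l1 => hle; move: hge; rewrite /l1 => hge.
have t1 := ler_distD y.1 a.1 b.1.
have z3 : `|a.2 - b.2| = 0 by rewrite e2 subrr normr0.
rewrite z3 in hle.
have hy2 : y.2 = a.2.
  have : `|a.2 - y.2| + `|y.2 - b.2| <= 0 by lra.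
  by move/abs0/eqP; rewrite subr_eq0 => /eqP.
have z1 : `|a.2 - y.2| = 0 by rewrite hy2 subrr normr0.
have z2 : `|y.2 - b.2| = 0 by rewrite hy2 e2 subrr normr0.
rewrite z1 in hle; rewrite z2 in hge.
have hy1 : bet a.1 y.1 b.1 by apply: abs_bet; lra.
move/(seg_hP' x e2): hx => [hx2 hx1].
case: (bet_split hy1 hx1) => h.
- by left; apply/(seg_hP' _ (esym hy2)); split => //; rewrite hx2.
- right; apply: IH => //; first by rewrite hy2.
    rewrite /l1 z2 addr0; have := bet_abs hy1; lra.
  by apply/(seg_hP' _ (etrans hy2 e2)); split => //; rewrite hx2 hy2.
Qed.

Lemma seg_vP' a b x : a.1 = b.1 -> seg a b x <-> x.1 = a.1 /\ bet a.2 x.2 b.2.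
Proof. exact: seg_vP. Qed.

Lemma ortho_keyV ps a b : axis_chain a ps -> last a ps = b -> a.1 = b.1 ->
  plen a ps <= l1 a b -> forall x, seg a b x -> ptrace a ps x.
Proof.
elim: ps a => [|y t IH] a /=.
  by move=> _ <- _ _ x /seg_pt.
case=> hay hch hl e2 hle x hx.
have hge := plen_ge y t; rewrite hl in hge.
move: hle; rewrite /l1 => hle; move: hge; rewrite /l1 => hge.
have t1 := ler_distD y.2 a.2 b.2.
have z3 : `|a.1 - b.1| = 0 by rewrite e2 subrr normr0.
rewrite z3 in hle.
have hy2 : y.1 = a.1.
  have : `|a.1 - y.1| + `|y.1 - b.1| <= 0 by lra.
  by move/abs0/eqP; rewrite subr_eq0 => /eqP.
have z1 : `|a.1 - y.1| = 0 by rewrite hy2 subrr normr0.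
have z2 : `|y.1 - b.1| = 0 by rewrite hy2 e2 subrr normr0.
rewrite z1 in hle; rewrite z2 in hge.
have hy1 : bet a.2 y.2 b.2 by apply: abs_bet; lra.
move/(seg_vP' x e2): hx => [hx2 hx1].
case: (bet_split hy1 hx1) => h.
- by left; apply/(seg_vP' _ (esym hy2)); split => //; rewrite hx2.
- right; apply: IH => //; first by rewrite hy2.
    rewrite /l1 z2 add0r; have := bet_abs hy1; lra.
  by apply/(seg_vP' _ (etrans hy2 e2)); split => //; rewrite hx2 hy2.
Qed.

Definition orthoH w := forall a b x, w a -> w b -> a.2 = b.2 -> seg a b x -> w x.
Definition orthoV w := forall a b x, w a -> w b -> a.1 = b.1 -> seg a b x -> w x.

Lemma rc_orthoH w : rect_convex w -> orthoH w.
Proof.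
move=> hc a b x ha hb e hx; case: (hc a b ha hb) => ps [hl [[hch hmin] htr]].
apply: htr; apply: (ortho_key hch hl e) => //.
have := hmin [:: b]; rewrite hl /= addr0; apply => //; split => //; by right.
Qed.

Lemma rc_orthoV w : rect_convex w -> orthoV w.
Proof.
move=> hc a b x ha hb e hx; case: (hc a b ha hb) => ps [hl [[hch hmin] htr]].
apply: htr; apply: (ortho_keyV hch hl e) => //.
have := hmin [:: b]; rewrite hl /= addr0; apply => //; split => //; by left.
Qed.

Lemma oc_traceE p q c x : oc_trace p q c x <-> seg p c x \/ seg c q x.
Proof.
rewrite /oc_trace /=; split.
- by case=> [h|[h|->]]; [left|right|right; apply: seg_r].
- by case=> h; [left|right; left].
Qed.

Lemma oc_len p q c : c = (q.1, p.2) \/ c = (p.1, q.2) -> plen p [:: c; q] = l1 p q.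
Proof.
case=> ->; rewrite /= /l1 /= !subrr normr0; ring.
Qed.

Lemma oc_valid p q c : c = (q.1, p.2) \/ c = (p.1, q.2) -> one_corner_path p q c.
Proof.
move=> hc; split.
  case: hc => -> /=; split; [by right | split => //; by left | by left | split => //; by right].
move=> ps' _ hl; rewrite oc_len //; move: hl => /= <-; exact: plen_ge.
Qed.

Lemma oc_cases p q c : one_corner_path p q c ->
  c = (q.1, p.2) \/ c = (p.1, q.2) \/ (p.2 = q.2 /\ c.2 = p.2 /\ bet p.1 c.1 q.1)
  \/ (p.1 = q.1 /\ c.1 = p.1 /\ bet p.2 c.2 q.2).
Proof.
case=> [[h1 [h2 _]] hmin].
have hl : plen p [:: c; q] <= plen p [:: (q.1, p.2); q].
  apply: hmin => //; split; [by right| split => //; by left].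
rewrite (@oc_len p q (q.1, p.2)) in hl; last by left.
move: hl; rewrite /= /l1 => hl.
clear hmin; case: c h1 h2 hl => c1 c2 /= h1 h2 hl.
case: h1 => h1; case: h2 => h2; subst.
- right; right; right; split => //; split => //; apply: abs_bet.
  move: hl; rewrite !subrr normr0; lra.
- by right; left.
- by left.
- right; right; left; split => //; split => //; apply: abs_bet.
  move: hl; rewrite !subrr normr0; lra.
Qed.

Lemma oc_alignH p q c : p.2 = q.2 -> one_corner_path p q c ->
  forall x, seg p q x -> oc_trace p q c x.
Proof.
move=> e hc x hx; apply/oc_traceE.
case: (oc_cases hc) => [->|[->|[[_ [h2 hb]]|[e1 [h1 hb]]]]].
- have -> : (q.1, p.2) = q by rewrite e -surjective_pairing.
  by left.
- have -> : (p.1, q.2) = p by rewrite -e -surjective_pairing.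
  by right.
- move/(seg_hP' x e): hx => [hx2 hx1].
  case: (bet_split hb hx1) => h.
  + by left; apply/seg_hP' => //; split.
  + by right; apply/seg_hP'; [rewrite h2 | split => //; rewrite hx2 h2].
- have epq : p = q by case: p q e e1 {hx hc hb h1} => ? ? [? ?] /= -> ->.
  subst q; move/seg_pt: hx => ->; left; exact: seg_l.
Qed.

Lemma oc_alignV p q c : p.1 = q.1 -> one_corner_path p q c ->
  forall x, seg p q x -> oc_trace p q c x.
Proof.
move=> e hc x hx; apply/oc_traceE.
case: (oc_cases hc) => [->|[->|[[e2 [h2 hb]]|[_ [h1 hb]]]]].
- have -> : (q.1, p.2) = p by rewrite -e -surjective_pairing.
  by right.
- have -> : (p.1, q.2) = q by rewrite e -surjective_pairing.
  by left.
- have epq : p = q by case: p q e e2 {hx hc hb h2} => ? ? [? ?] /= -> ->.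
  subst q; move/seg_pt: hx => ->; left; exact: seg_l.
- move/(seg_vP' x e): hx => [hx2 hx1].
  case: (bet_split hb hx1) => h.
  + by left; apply/seg_vP' => //; split.
  + by right; apply/seg_vP'; [rewrite h1 | split => //; rewrite hx2 h1].
Qed.

Lemma ball_coord p e q : 0 < e -> ball p e q ->
  [/\ q.1 - p.1 < e, p.1 - q.1 < e, q.2 - p.2 < e & p.2 - q.2 < e].
Proof.
rewrite /ball => he h.
have h1 := sqr_ge0 (q.1 - p.1); have h2 := sqr_ge0 (q.2 - p.2).
rewrite !expr2 in h h1 h2.
split; nra.
Qed.

Lemma int_in w z : interior w z -> w z.
Proof.
case=> e he h; apply: h; rewrite /ball !subrr expr2 mul0r addr0 exprn_gt0 //.
Qed.

Lemma int_nb w z : interior w z -> exists2 e, 0 < e &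
  [/\ w (z.1, z.2 + e), w (z.1, z.2 - e), w (z.1 + e, z.2) & w (z.1 - e, z.2)].
Proof.
case=> e he h; exists (e / 2); first by rewrite divr_gt0.
have hq : (e / 2) ^+ 2 < e ^+ 2.
  rewrite !expr2; have : e / 2 < e by rewrite ltr_pdivrMr // ; lra.
  have : 0 < e / 2 by rewrite divr_gt0. nra.
split; apply: h; rewrite /ball /=.
- by rewrite subrr expr2 mul0r add0r addrAC subrr add0r.
- by rewrite subrr expr2 mul0r add0r addrAC subrr add0r sqrrN.
- by rewrite addrAC subrr add0r subrr [0 ^+ 2]expr2 mul0r addr0.
- by rewrite addrAC subrr add0r subrr [0 ^+ 2]expr2 mul0r addr0 sqrrN.
Qed.

Lemma ball_sw p e q : ball (sw p) e (sw q) <-> ball p e q.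
Proof. by rewrite /ball /sw /= addrC. Qed.

Lemma int_sw w z : interior (fun x => w (sw x)) (sw z) <-> interior w z.
Proof.
split; case=> e he h; exists e => // q hq.
- rewrite -(swK q); apply: h; exact/ball_sw.
- apply: h; rewrite -(swK z) in hq; exact/ball_sw.
Qed.

Lemma int_swE w z : interior (fun x => w (sw x)) z <-> interior w (sw z).
Proof. by rewrite -{1}(swK z) int_sw. Qed.

Lemma orthoV_sw w : orthoV w -> orthoH (fun x => w (sw x)).
Proof.
move=> h a b x ha hb e hx; apply: (h (sw a) (sw b)) => //; exact/seg_sw.
Qed.

Definition hfun (A B : pt R) (y : R) := A.1 + (B.1 - A.1) / (B.2 - A.2) * (y - A.2).

Lemma hfun_seg A B (y : R) : A.2 < B.2 -> A.2 <= y <= B.2 -> seg A B (hfun A B y, y).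
Proof.
move=> hAB /andP [h1 h2]; have hd : B.2 - A.2 != 0 by rewrite subr_eq0 gt_eqF.
have hp : 0 < B.2 - A.2 by lra.
exists ((y - A.2) / (B.2 - A.2)); split.
  apply/andP; split; first by apply: divr_ge0; lra.
  by rewrite ler_pdivrMr // mul1r; lra.
rewrite /hfun; congr pair; field; exact: hd.
Qed.

Lemma hfun_aff A B (a b t : R) :
  hfun A B ((1 - t) * a + t * b) = (1 - t) * hfun A B a + t * hfun A B b.
Proof. rewrite /hfun; ring. Qed.

Lemma HP w A B z e0 :
  orthoH w -> (forall x, seg A B x -> w x) -> A.2 < B.2 -> interior w z ->
  A.2 < z.2 < B.2 -> e0.2 = z.2 -> bet z.1 e0.1 (hfun A B z.2) ->
  e0.1 != hfun A B z.2 -> interior w e0.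
Proof.
move=> hO hAB hlt [e he hb] /andP [hz1 hz2] e2 hbet hne.
set k := (B.1 - A.1) / (B.2 - A.2).
set H := hfun A B z.2.
set D := H - e0.1.
have hD : 0 < `|D| by rewrite normr_gt0 subr_eq0 eq_sym.
have hk1 : 0 < `|k| + 1 by have := normr_ge0 k; lra.
have hzA : 0 < z.2 - A.2 by rewrite subr_gt0.
have hzB : 0 < B.2 - z.2 by rewrite subr_gt0.
have [e1 he1 [he1a he1b]] := pos2 he hzA.
have [e2' he2 [he2a he2b]] := pos2 he1 hzB.
have [eps heps [hepsa hepsb]] := pos2 he2 (divr_gt0 hD hk1).
exists eps => // u hu.
have [b1 b2 b3 b4] := ball_coord heps hu.
set us := (u.1 - (e0.1 - z.1), u.2).
have wus : w us.
  apply: hb; rewrite /ball /us /=.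
  have -> : u.1 - (e0.1 - z.1) - z.1 = u.1 - e0.1 by ring.
  have -> : u.2 - z.2 = u.2 - e0.2 by rewrite e2.
  apply: lt_le_trans hu _; rewrite !expr2; nra.
have hy : A.2 <= u.2 <= B.2 by apply/andP; split; lra.
have wS := hAB _ (hfun_seg hlt hy).
apply: (hO us _ u wus wS erefl); apply/seg_hP' => //; split => //.
have hku : hfun A B u.2 = H + k * (u.2 - z.2) by rewrite /H /hfun /k; ring.
have hkd : `|k * (u.2 - z.2)| <= `|k| * eps.
  rewrite normrM; apply: ler_wpM2l; first exact: normr_ge0.
  by rewrite ler_norml; apply/andP; split; lra.
move: hkd; rewrite ler_norml => /andP [hk3 hk4].
move: hepsb; rewrite ler_pdivlMr // mulrDr mulr1 [eps * _]mulrC => hepsb.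
have eH : H = hfun A B z.2 by [].
rewrite /bet /us /= hku.
case: hbet => /andP [h1 h2].
- have hD' : `|D| = D by apply: ger0_norm; rewrite /D; lra.
  rewrite hD' in hepsb; rewrite /D in hepsb.
  left; apply/andP; split; lra.
- have hD' : `|D| = - D.
    apply: ltr0_norm; rewrite /D; rewrite lt_neqAle; apply/andP; split.
      by rewrite subr_eq0 eq_sym.
    lra.
  rewrite hD' in hepsb; rewrite /D in hepsb.
  right; apply/andP; split; lra.
Qed.

End Geo.

Section Geo2.
Variable R : realType.
Implicit Types (p q a b c x y z u : pt R) (w : region R).

Lemma nbet (a h b : R) : ~ bet a h b -> (h < a /\ h < b) \/ (a < h /\ b < h).
Proof.
rewrite /bet => hn.
case: (ltrP h a) => h1; case: (ltrP h b) => h2.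
- by left.
- by exfalso; apply: hn; right; apply/andP; split; lra.
- by exfalso; apply: hn; left; apply/andP; split; lra.
- by right; split; lra.
Qed.

Lemma out_split (a z b h : R) : bet a z b -> ~ bet a h b ->
  (bet z a h /\ bet h a b /\ a != h) \/ (bet z b h /\ bet h b a /\ b != h).
Proof.
move=> hz /nbet hn; move: hz; rewrite /bet.
case=> /andP [h1 h2]; case: hn => [[h3 h4]|[h3 h4]].
- left; split; [right|split; [left|]]; try (apply/andP; split; lra).
  by rewrite neq_lt; apply/orP; right; lra.
- right; split; [left|split; [right|]]; try (apply/andP; split; lra).
  by rewrite neq_lt; apply/orP; left; lra.
- right; split; [right|split; [left|]]; try (apply/andP; split; lra).
  by rewrite neq_lt; apply/orP; right; lra.
- left; split; [left|split; [right|]]; try (apply/andP; split; lra).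
  by rewrite neq_lt; apply/orP; left; lra.
Qed.

Lemma int_bounds2 w z (Y0 Y1 : R) : (forall q, w q -> Y0 <= q.2 <= Y1) ->
  interior w z -> Y0 < z.2 < Y1.
Proof.
move=> hb /int_nb [e he [h1 h2 _ _]].
have /andP [_ k1] := hb _ h1; have /andP [k2 _] := hb _ h2.
by rewrite /= in k1 k2; apply/andP; split; lra.
Qed.

Lemma int_bounds1 w z (X0 X1 : R) : (forall q, w q -> X0 <= q.1 <= X1) ->
  interior w z -> X0 < z.1 < X1.
Proof.
move=> hb /int_nb [e he [_ _ h1 h2]].
have /andP [_ k1] := hb _ h1; have /andP [k2 _] := hb _ h2.
by rewrite /= in k1 k2; apply/andP; split; lra.
Qed.

Lemma SegH w A B a b z :
  orthoH w -> (forall x, seg A B x -> w x) -> A.2 < B.2 ->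
  (forall q, w q -> A.2 <= q.2 <= B.2) ->
  a.2 = b.2 -> seg a b z -> interior w z ->
  (forall x, seg a b x -> ~ seg A B x) ->
  (interior w a /\ bet (hfun A B a.2) a.1 b.1) \/
  (interior w b /\ bet (hfun A B a.2) b.1 a.1).
Proof.
move=> hO hAB hlt hbd e hz iz hav.
have /andP [hz1 hz2] := int_bounds2 hbd iz.
move/(seg_hP' z e): (hz) => [ez hzb].
have hS := hfun_seg hlt (_ : A.2 <= z.2 <= B.2).
have hSn : ~ bet a.1 (hfun A B z.2) b.1.
  move=> hb; apply: (hav (hfun A B z.2, z.2)); last by apply: hS; apply/andP; split; lra.
  by apply/seg_hP' => //; split.
have hzz : A.2 < z.2 < B.2 by apply/andP; split.
rewrite -ez.
case: (out_split hzb hSn) => [[h1 [h2 h3]]|[h1 [h2 h3]]].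
- left; split => //; exact: (HP hO hAB hlt iz hzz (esym ez) h1 h3).
- right; split => //; exact: (HP hO hAB hlt iz hzz (esym (etrans ez e)) h1 h3).
Qed.

Lemma RootH A B a b : A.2 < B.2 -> a.1 = b.1 ->
  A.2 <= a.2 <= B.2 -> A.2 <= b.2 <= B.2 ->
  bet (hfun A B a.2) a.1 (hfun A B b.2) -> exists x, seg a b x /\ seg A B x.
Proof.
move=> hlt e1 /andP [ha1 ha2] /andP [hb1 hb2] hbet.
set ga := hfun A B a.2 - a.1; set gb := hfun A B b.2 - a.1.
have [hga|hga] := eqVneq ga 0.
  exists a; split; first exact: seg_l.
  have -> : a = (hfun A B a.2, a.2).
    by move/eqP: hga; rewrite subr_eq0 => /eqP ->; case: a {e1 ha1 ha2 hbet ga gb}.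
  by apply: hfun_seg => //; apply/andP; split.
have hb' : (ga <= 0 <= gb) \/ (gb <= 0 <= ga).
  by rewrite /ga /gb; case: hbet => /andP [? ?]; [left|right]; apply/andP; split; lra.
clear hbet.
have hne : ga - gb != 0.
  apply/eqP => h0; move/eqP: hga; apply.
  by case: hb' => /andP [? ?]; lra.
set t := ga / (ga - gb).
have ht : 0 <= t <= 1.
  rewrite /t; case: hb' => /andP [k1 k2].
  - have hp : ga - gb < 0.
      rewrite lt_neqAle hne /=; lra.
    apply/andP; split.
      by rewrite -mulrNN; apply: mulr_ge0; [lra| rewrite -invrN invr_ge0; lra].
    by rewrite ler_ndivrMr // mul1r; lra.
  - have hp : 0 < ga - gb.
      rewrite lt_neqAle eq_sym hne /=; lra.
    apply/andP; split; first by apply: divr_ge0; lra.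
    by rewrite ler_pdivrMr // mul1r; lra.
exists ((1 - t) * a.1 + t * b.1, (1 - t) * a.2 + t * b.2); split; first exact: seg_mk.
have -> : (1 - t) * a.1 + t * b.1 = hfun A B ((1 - t) * a.2 + t * b.2).
  rewrite hfun_aff -e1.
  have -> : hfun A B a.2 = ga + a.1 by rewrite /ga; ring.
  have -> : hfun A B b.2 = gb + a.1 by rewrite /gb; ring.
  rewrite /t; field; exact: hne.
move/andP: ht => [ht1 ht2].
apply: hfun_seg => //; apply/andP; split; nra.
Qed.

End Geo2.

Section Geo3.
Variable R : realType.
Implicit Types (p q a b c x y z u : pt R) (w : region R).

Lemma bet_sym (a x b : R) : bet a x b -> bet b x a.
Proof. by case=> h; [right|left]. Qed.

Lemma bet_r (a b : R) : bet a b b.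
Proof. case: (lerP a b) => h; [left|right]; apply/andP; split; lra. Qed.

Lemma L1 (h0 x p0 z h1 : R) : bet h0 x p0 -> bet p0 z x -> ~ bet z x h1 -> bet h0 x h1.
Proof.
move=> k1 k2 /nbet k3; move: k1 k2; rewrite /bet.
case=> /andP [? ?]; case=> /andP [? ?]; case: k3 => [[? ?]|[? ?]];
first [left; apply/andP; split; lra | right; apply/andP; split; lra | lra].
Qed.

Section Sw.
Variables (w : region R) (C D : pt R).
Hypotheses (hO : orthoV w) (hCD : forall x, seg C D x -> w x) (hlt : C.1 < D.1)
  (hbd : forall q, w q -> C.1 <= q.1 <= D.1).

Let W := fun x => w (sw x).
Let hOW : orthoH W. Proof. exact: orthoV_sw. Qed.
Let hCDW : forall x, seg (sw C) (sw D) x -> W x.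
Proof. by move=> x /seg_swE /hCD. Qed.
Let hbdW : forall q, W q -> (sw C).2 <= q.2 <= (sw D).2.
Proof. by move=> q /hbd. Qed.

Lemma hfun_segV (r : R) : C.1 <= r <= D.1 -> seg C D (r, hfun (sw C) (sw D) r).
Proof.
by move=> h; move/seg_swE: (@hfun_seg _ (sw C) (sw D) r hlt h).
Qed.

Lemma SegV a b z : a.1 = b.1 -> seg a b z -> interior w z ->
  (forall x, seg a b x -> ~ seg C D x) ->
  (interior w a /\ bet (hfun (sw C) (sw D) a.1) a.2 b.2) \/
  (interior w b /\ bet (hfun (sw C) (sw D) a.1) b.2 a.2).
Proof.
move=> e hz iz hav.
have := @SegH _ W (sw C) (sw D) (sw a) (sw b) (sw z) hOW hCDW hlt hbdW e.
rewrite !int_sw seg_sw; move/(_ hz iz) => h.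
case: h.
- by move=> x /seg_swE hx /seg_swE; apply: hav.
- by move=> [h1 h2]; left.
- by move=> [h1 h2]; right.
Qed.

Lemma HPV z e0 : interior w z -> C.1 < z.1 < D.1 -> e0.1 = z.1 ->
  bet z.2 e0.2 (hfun (sw C) (sw D) z.1) -> e0.2 != hfun (sw C) (sw D) z.1 ->
  interior w e0.
Proof.
move=> iz hz e1 hb hn.
have := @HP _ W (sw C) (sw D) (sw z) (sw e0) hOW hCDW hlt.
by rewrite !int_sw; apply.
Qed.

Lemma RootV a b : a.2 = b.2 -> C.1 <= a.1 <= D.1 -> C.1 <= b.1 <= D.1 ->
  bet (hfun (sw C) (sw D) a.1) a.2 (hfun (sw C) (sw D) b.1) ->
  exists x, seg a b x /\ seg C D x.
Proof.
move=> e ha hb hbet.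
have [x [h1 h2]] := @RootH _ (sw C) (sw D) (sw a) (sw b) hlt e ha hb hbet.
by exists (sw x); split; apply/seg_swE.
Qed.

End Sw.

Lemma core w A B C D p q :
  orthoH w -> orthoV w ->
  (forall x, seg A B x -> w x) -> (forall x, seg C D x -> w x) ->
  A.2 < B.2 -> C.1 < D.1 ->
  (forall q, w q -> A.2 <= q.2 <= B.2) -> (forall q, w q -> C.1 <= q.1 <= D.1) ->
  ~ interior w p -> ~ interior w q ->
  (forall x, seg p (q.1, p.2) x \/ seg (q.1, p.2) q x -> ~ seg A B x /\ ~ seg C D x) ->
  (exists z, (seg p (q.1, p.2) z \/ seg (q.1, p.2) q z) /\ interior w z) ->
  (exists z, (seg p (p.1, q.2) z \/ seg (p.1, q.2) q z) /\ interior w z) ->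
  False.
Proof.
move=> hOH hOV hAB hCD hAB2 hCD1 hbdy hbdx np nq hav [z [hz iz]] [z' [hz' iz']].
set c := (q.1, p.2); set c' := (p.1, q.2).
set H := hfun A B; set V := hfun (sw C) (sw D).
have avH : forall x, seg p c x -> ~ seg A B x by move=> x hx; case: (hav x (or_introl hx)).
have avH' : forall x, seg c q x -> ~ seg A B x by move=> x hx; case: (hav x (or_intror hx)).
have avV : forall x, seg p c x -> ~ seg C D x by move=> x hx; case: (hav x (or_introl hx)).
have avV' : forall x, seg c q x -> ~ seg C D x by move=> x hx; case: (hav x (or_intror hx)).
have epc : p.2 = c.2 by [].
have ecq : c.1 = q.1 by [].
have [ic [dH dV]] : interior w c /\ bet (H p.2) q.1 p.1 /\ bet (V q.1) p.2 q.2.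
  case: hz => hz.
  - case: (SegH hOH hAB hAB2 hbdy epc hz iz avH) => [[] //|[ic dH]].
    case: (SegV hOV hCD hCD1 hbdx ecq (seg_l c q) ic avV') => [[_ dV]|[] //].
    by split => //; split => //; apply: bet_sym.
  - case: (SegV hOV hCD hCD1 hbdx ecq hz iz avV') => [[ic dV]|[] //].
    have avH2 : forall x, seg c p x -> ~ seg A B x by move=> x /seg_sym; apply: avH.
    case: (SegH hOH hAB hAB2 hbdy (esym epc) (seg_l c p) ic avH2) => [[_ dH]|[] //].
    by split => //; split.
have /andP [hp2a hp2b] := int_bounds2 hbdy ic.
have /andP [hq1a hq1b] := int_bounds1 hbdx ic.
case: hz' => hz'.
-
  have e1 : p.1 = c'.1 by [].
  move/(seg_vP' z' e1): (hz') => [ez1 hzb].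
  have /andP [hz1a hz1b] := int_bounds1 hbdx iz'.
  have hzz : C.1 < z'.1 < D.1 by apply/andP; split.
  have [hpv|hpv] := eqVneq p.2 (V p.1).
    have hpr : C.1 <= p.1 <= D.1 by rewrite -ez1; apply/andP; split; lra.
    apply: (avV p (seg_l p c)).
    have -> : p = (p.1, V p.1) by rewrite -hpv -surjective_pairing.
    exact: hfun_segV.
  have hnb : ~ bet z'.2 p.2 (V p.1).
    move=> hb; apply: np; apply: (HPV hOV hCD hCD1 iz' hzz) => //.
      by rewrite ez1.
    by rewrite ez1.
  have hb2 : bet (V q.1) p.2 (V p.1).
    apply: (L1 dV _ hnb); exact: bet_sym.
  have hpr : C.1 <= p.1 <= D.1 by rewrite -ez1; apply/andP; split; lra.
  have hqr : C.1 <= c.1 <= D.1 by apply/andP; split; lra.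
  have [x [hx1 hx2]] := RootV hCD1 epc hpr hqr (bet_sym hb2).
  exact: (avV x hx1 hx2).
-
  have e2 : c'.2 = q.2 by [].
  move/(seg_hP' z' e2): (hz') => [ez2 hzb].
  have {}ez2 : z'.2 = q.2 by rewrite ez2.
  have /andP [hz2a hz2b] := int_bounds2 hbdy iz'.
  have hzz : A.2 < z'.2 < B.2 by apply/andP; split.
  have [hqh|hqh] := eqVneq q.1 (H q.2).
    have hqr : A.2 <= q.2 <= B.2 by rewrite -ez2; apply/andP; split; lra.
    apply: (avH' q (seg_r c q)).
    have -> : q = (H q.2, q.2) by rewrite -hqh -surjective_pairing.
    exact: hfun_seg.
  have hnb : ~ bet z'.1 q.1 (H q.2).
    move=> hb; apply: nq; apply: (HP hOH hAB hAB2 iz' hzz) => //.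
      by rewrite ez2.
    by rewrite ez2.
  have hb2 : bet (H p.2) q.1 (H q.2).
    exact: (L1 dH hzb hnb).
  have hqr : A.2 <= q.2 <= B.2 by rewrite -ez2; apply/andP; split; lra.
  have hcr : A.2 <= c.2 <= B.2 by apply/andP; split; lra.
  have [x [hx1 hx2]] := RootH hAB2 ecq hcr hqr hb2.
  exact: (avH' x hx1 hx2).
Qed.

End Geo3.

Section Geo4.
Variable R : realType.
Implicit Types (p q a b c x y z u : pt R) (w : region R).

Lemma PRup w u u' v v' : orthoH w -> u.1 = u'.1 -> v.1 = v'.1 -> u.2 = v.2 ->
  u.1 < v.1 -> (forall x, seg u u' x -> w x) -> (forall x, seg v v' x -> w x) ->
  u.2 < u'.2 -> u.2 < v'.2 ->
  forall eps, 0 < eps -> exists z, interior w z /\ z.2 < u.2 + eps.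
Proof.
move=> hO e1 e2 e3 huv hu hv h1 h2 eps heps.
have k1 : 0 < u'.2 - u.2 by lra.
have k2 : 0 < v'.2 - u.2 by lra.
have [d hd [hd1 hd2]] := pos2 k1 k2.
have [t0 ht0 [ht1 ht2]] := pos2 hd heps.
set t := t0 / 2.
have ht : 0 < t /\ t < t0 by rewrite /t; split; lra.
case: ht => ht ht'.
have k3 : 0 < d - t by lra.
have k4 : 0 < (v.1 - u.1) / 2 by lra.
have [r1 hr1 [hr1a hr1b]] := pos2 ht k3.
have [r hr [hra hrb]] := pos2 hr1 k4.
exists ((u.1 + v.1) / 2, u.2 + t); split; last by rewrite /=; lra.
exists r => // q hq.
have [b1 b2 b3 b4] := ball_coord hr hq; rewrite /= in b1 b2 b3 b4.
have wu : w (u.1, q.2).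
  apply: hu; apply/seg_vP' => //; split => //; left; apply/andP; split => /=; lra.
have wv : w (v.1, q.2).
  apply: hv; apply/seg_vP' => //; split => //; rewrite -e3; left; apply/andP; split => /=; lra.
rewrite [q]surjective_pairing; apply: (hO _ _ _ wu wv erefl).
apply/seg_hP' => //; split => //; left; apply/andP; split => /=; lra.
Qed.

Lemma PRdown w u u' v v' : orthoH w -> u.1 = u'.1 -> v.1 = v'.1 -> u.2 = v.2 ->
  u.1 < v.1 -> (forall x, seg u u' x -> w x) -> (forall x, seg v v' x -> w x) ->
  u'.2 < u.2 -> v'.2 < u.2 ->
  forall eps, 0 < eps -> exists z, interior w z /\ u.2 - eps < z.2.
Proof.
move=> hO e1 e2 e3 huv hu hv h1 h2 eps heps.
have k1 : 0 < u.2 - u'.2 by lra.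
have k2 : 0 < u.2 - v'.2 by lra.
have [d hd [hd1 hd2]] := pos2 k1 k2.
have [t0 ht0 [ht1 ht2]] := pos2 hd heps.
set t := t0 / 2.
have ht : 0 < t /\ t < t0 by rewrite /t; split; lra.
case: ht => ht ht'.
have k3 : 0 < d - t by lra.
have k4 : 0 < (v.1 - u.1) / 2 by lra.
have [r1 hr1 [hr1a hr1b]] := pos2 ht k3.
have [r hr [hra hrb]] := pos2 hr1 k4.
exists ((u.1 + v.1) / 2, u.2 - t); split; last by rewrite /=; lra.
exists r => // q hq.
have [b1 b2 b3 b4] := ball_coord hr hq; rewrite /= in b1 b2 b3 b4.
have wu : w (u.1, q.2).
  apply: hu; apply/seg_vP' => //; split => //; right; apply/andP; split => /=; lra.
have wv : w (v.1, q.2).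
  apply: hv; apply/seg_vP' => //; split => //; rewrite -e3; right; apply/andP; split => /=; lra.
rewrite [q]surjective_pairing; apply: (hO _ _ _ wu wv erefl).
apply/seg_hP' => //; split => //; left; apply/andP; split => /=; lra.
Qed.

End Geo4.

Local Close Scope ring_scope.
Lemma modoff k n a b : (a < n)%N -> (b < n)%N -> a != b -> (k + a) %% n != (k + b) %% n.
Proof. move=> ha hb hab. by rewrite eqn_modDl !modn_small. Qed.

Section Poly.
Variable R : realType.
Implicit Types (p q a b c x y z u : pt R).
Variables (w : region R) (vs : seq (pt R)).
Hypothesis hob : obstacle w vs.
Hypothesis hrect : rectilinear vs.
Hypothesis hrc : rect_convex w.

Let n := size vs.

Lemma n3 : (3 <= n)%N. Proof. by case: hob => [[]]. Qed.
Lemma n0 : (0 < n)%N. Proof. by have := n3; case: n. Qed.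

Lemma vtx_mod k : vtx vs (k %% n) = vtx vs k.
Proof. by rewrite /vtx modn_mod. Qed.

Lemma vtx_modS k : vtx vs (k %% n).+1 = vtx vs k.+1.
Proof. by rewrite /vtx -addn1 modnDml addn1. Qed.

Lemma vtx_addn k : vtx vs (k + n) = vtx vs k.
Proof. by rewrite /vtx modnDr. Qed.

Lemma edge_mod k : edge vs (k %% n) = edge vs k.
Proof. by rewrite /edge vtx_mod vtx_modS. Qed.

Lemma on_edge k x : edge vs k x -> on_polygon vs x.
Proof. by move=> h; exists (k %% n); [rewrite ltn_pmod // n0 | rewrite edge_mod]. Qed.

Lemma poly_w x : on_polygon vs x -> w x.
Proof.
move=> h; case: hob => _ [_ [hcl [_ [_ hbd]]]].
apply: hcl => e he; have := (proj2 (hbd x) h e he); case=> [[q [h1 h2]] _].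
by exists q.
Qed.

Lemma vtx_w k : w (vtx vs k).
Proof. by apply: poly_w; apply: (@on_edge k); exact: seg_l. Qed.

Lemma vtx_neq k (a b : nat) : (a < n)%N -> (b < n)%N -> a != b -> vtx vs (k + a) <> vtx vs (k + b).
Proof.
move=> ha hb hab; case: hob => [[_ [hd _]] _].
rewrite -vtx_mod -[vtx vs (k + b)]vtx_mod; apply: hd; try exact: ltn_pmod n0.
by apply/eqP; apply: modoff.
Qed.

Lemma vtx_neq1 k : vtx vs k <> vtx vs k.+1.
Proof. by have := @vtx_neq k 0 1; rewrite addn0 addn1; apply => //; have := n3; case: n => [|[|]]. Qed.

Lemma not3 k : ~ collinear (vtx vs k) (vtx vs k.+1) (vtx vs k.+2).
Proof.
case: hob => _ [hgp _].
have h3 := n3.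
rewrite -vtx_mod -[vtx vs k.+1]vtx_mod -[vtx vs k.+2]vtx_mod.
apply: hgp; try exact: ltn_pmod n0.
- by apply/eqP; have := @modoff k n 0 1; rewrite addn0 addn1; apply => //; lia.
- by apply/eqP; have := @modoff k n 1 2; rewrite addn1 addn2; apply => //; lia.
- by apply/eqP; have := @modoff k n 0 2; rewrite addn0 addn2; apply => //; lia.
Qed.

Lemma not3h k : (vtx vs k).2 = (vtx vs k.+1).2 -> (vtx vs k.+1).2 = (vtx vs k.+2).2 -> False.
Proof.
move=> e1 e2; apply: (@not3 k); rewrite /collinear -e2 -e1 subrr; ring.
Qed.

Lemma not3v k : (vtx vs k).1 = (vtx vs k.+1).1 -> (vtx vs k.+1).1 = (vtx vs k.+2).1 -> False.
Proof.
move=> e1 e2; apply: (@not3 k); rewrite /collinear -e2 -e1 subrr; ring.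
Qed.

Lemma rect_at k : (vtx vs k).1 = (vtx vs k.+1).1 \/ (vtx vs k).2 = (vtx vs k.+1).2.
Proof.
by have := hrect (ltn_pmod k n0); rewrite vtx_mod vtx_modS.
Qed.

Lemma adj_next_h k : (vtx vs k).2 = (vtx vs k.+1).2 -> (vtx vs k.+1).1 = (vtx vs k.+2).1.
Proof. by move=> e; case: (rect_at k.+1) => // e2; case: (not3h e e2). Qed.

Lemma adj_next_v k : (vtx vs k).1 = (vtx vs k.+1).1 -> (vtx vs k.+1).2 = (vtx vs k.+2).2.
Proof. by move=> e; case: (rect_at k.+1) => // e2; case: (not3v e e2). Qed.

Lemma prevS k : vtx vs (k + n.-1).+1 = vtx vs k.
Proof. by rewrite -addnS prednK ?n0 // vtx_addn. Qed.

Lemma prevSS k : vtx vs (k + n.-1).+2 = vtx vs k.+1.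
Proof. by rewrite -!addnS prednK ?n0 // -addSnnS addSn -[(k + n).+1]addSn vtx_addn. Qed.

Lemma adj_prev_h k : (vtx vs k).2 = (vtx vs k.+1).2 -> (vtx vs (k + n.-1)).1 = (vtx vs k).1.
Proof.
move=> e; case: (rect_at (k + n.-1)); rewrite prevS // => e2.
by case: (@not3h (k + n.-1)); rewrite prevS ?prevSS.
Qed.

Lemma adj_prev_v k : (vtx vs k).1 = (vtx vs k.+1).1 -> (vtx vs (k + n.-1)).2 = (vtx vs k).2.
Proof.
move=> e; case: (rect_at (k + n.-1)); rewrite prevS // => e2.
by case: (@not3v (k + n.-1)); rewrite prevS ?prevSS.
Qed.

Lemma vtx_neqp k : vtx vs (k + n.-1) <> vtx vs k.
Proof. by move=> h; apply: (@vtx_neq1 (k + n.-1)); rewrite prevS. Qed.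

Local Open Scope ring_scope.
Lemma pair_eq (a b : pt R) : a.1 = b.1 -> a.2 = b.2 -> a = b.
Proof. by case: a b => ? ? [? ?] /= -> ->. Qed.

Lemma edge_w k x : edge vs k x -> w x.
Proof. by move=> h; apply: poly_w; apply: on_edge h. Qed.

Lemma seg_prev_w k x : seg (vtx vs k) (vtx vs (k + n.-1)) x -> w x.
Proof. by move=> /seg_sym h; apply: (@edge_w (k + n.-1)); rewrite /edge prevS. Qed.

Lemma seg_next_w k x : seg (vtx vs k.+1) (vtx vs k.+2) x -> w x.
Proof. by move=> h; apply: (@edge_w k.+1). Qed.

Lemma bottom_near i : bottom_edge w vs i -> forall eps : R, (0 < eps)%R ->
  exists z, interior w z /\ (z.2 < (vtx vs i).2 + eps)%R.
Proof.
case=> _ [hu hv] eps he.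
have hO := rc_orthoH hrc.
have e : (vtx vs i).2 = (vtx vs i.+1).2.
  by apply/eqP; rewrite eq_le (hu _ (vtx_w _)) (hv _ (vtx_w _)).
have e1 := adj_prev_h e; have e2 := adj_next_h e.
have hu' : (vtx vs i).2 < (vtx vs (i + n.-1)).2.
  rewrite lt_neqAle (hu _ (vtx_w _)) andbT; apply/eqP => e3.
  by apply: (@vtx_neqp i); apply: pair_eq.
have hv' : (vtx vs i).2 < (vtx vs i.+2).2.
  rewrite e lt_neqAle (hv _ (vtx_w _)) andbT; apply/eqP => e3.
  by apply: (@vtx_neq1 i.+1); apply: pair_eq.
have hne : (vtx vs i).1 != (vtx vs i.+1).1.
  by apply/eqP => e3; apply: (@vtx_neq1 i); apply: pair_eq.
case: (ltgtP (vtx vs i).1 (vtx vs i.+1).1) hne => // hlt _.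
- exact: (PRup hO (esym e1) e2 e hlt (@seg_prev_w i) (@seg_next_w i) hu' hv').
- rewrite e; rewrite e in hu' hv'.
  exact: (PRup hO e2 (esym e1) (esym e) hlt (@seg_next_w i) (@seg_prev_w i) hv' hu').
Qed.

Lemma top_near i : top_edge w vs i -> forall eps : R, (0 < eps)%R ->
  exists z, interior w z /\ ((vtx vs i).2 - eps < z.2)%R.
Proof.
case=> _ [hu hv] eps he.
have hO := rc_orthoH hrc.
have e : (vtx vs i).2 = (vtx vs i.+1).2.
  by apply/eqP; rewrite eq_le (hu _ (vtx_w _)) (hv _ (vtx_w _)).
have e1 := adj_prev_h e; have e2 := adj_next_h e.
have hu' : (vtx vs (i + n.-1)).2 < (vtx vs i).2.
  rewrite lt_neqAle (hu _ (vtx_w _)) andbT; apply/eqP => e3.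
  by apply: (@vtx_neqp i); apply: pair_eq.
have hv' : (vtx vs i.+2).2 < (vtx vs i).2.
  rewrite e lt_neqAle (hv _ (vtx_w _)) andbT; apply/eqP => e3.
  by apply: (@vtx_neq1 i.+1); apply: pair_eq.
have hne : (vtx vs i).1 != (vtx vs i.+1).1.
  by apply/eqP => e3; apply: (@vtx_neq1 i); apply: pair_eq.
case: (ltgtP (vtx vs i).1 (vtx vs i.+1).1) hne => // hlt _.
- exact: (PRdown hO (esym e1) e2 e hlt (@seg_prev_w i) (@seg_next_w i) hu' hv').
- rewrite e; rewrite e in hu' hv'.
  exact: (PRdown hO e2 (esym e1) (esym e) hlt (@seg_next_w i) (@seg_prev_w i) hv' hu').
Qed.

Lemma seg_prev_ws k x : seg (sw (vtx vs k)) (sw (vtx vs (k + n.-1))) x -> w (sw x).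
Proof. by move/seg_swE/seg_prev_w. Qed.
Lemma seg_next_ws k x : seg (sw (vtx vs k.+1)) (sw (vtx vs k.+2)) x -> w (sw x).
Proof. by move/seg_swE/seg_next_w. Qed.

Lemma left_near i : left_edge w vs i -> forall eps : R, 0 < eps ->
  exists z, interior w z /\ z.1 < (vtx vs i).1 + eps.
Proof.
case=> _ [hu hv] eps he.
have hO := orthoV_sw (rc_orthoV hrc).
have e : (vtx vs i).1 = (vtx vs i.+1).1.
  by apply/eqP; rewrite eq_le (hu _ (vtx_w _)) (hv _ (vtx_w _)).
have e1 := adj_prev_v e; have e2 := adj_next_v e.
have hu' : (vtx vs i).1 < (vtx vs (i + n.-1)).1.
  rewrite lt_neqAle (hu _ (vtx_w _)) andbT; apply/eqP => e3.
  by apply: (@vtx_neqp i); apply: pair_eq.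
have hv' : (vtx vs i).1 < (vtx vs i.+2).1.
  rewrite e lt_neqAle (hv _ (vtx_w _)) andbT; apply/eqP => e3.
  by apply: (@vtx_neq1 i.+1); apply: pair_eq.
have hne : (vtx vs i).2 != (vtx vs i.+1).2.
  by apply/eqP => e3; apply: (@vtx_neq1 i); apply: pair_eq.
case: (ltgtP (vtx vs i).2 (vtx vs i.+1).2) hne => // hlt _.
- have [z [iz hz]] := @PRup _ (fun x => w (sw x)) (sw (vtx vs i)) (sw (vtx vs (i + n.-1)))
    (sw (vtx vs i.+1)) (sw (vtx vs i.+2)) hO (esym e1) e2 e hlt (@seg_prev_ws i) (@seg_next_ws i) hu' hv' eps he.
  by exists (sw z); split => //; apply/int_swE.
- rewrite e; rewrite e in hu' hv'.
  have [z [iz hz]] := @PRup _ (fun x => w (sw x)) (sw (vtx vs i.+1)) (sw (vtx vs i.+2))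
    (sw (vtx vs i)) (sw (vtx vs (i + n.-1))) hO e2 (esym e1) (esym e) hlt (@seg_next_ws i) (@seg_prev_ws i) hv' hu' eps he.
  by exists (sw z); split => //; apply/int_swE.
Qed.

Lemma right_near i : right_edge w vs i -> forall eps : R, 0 < eps ->
  exists z, interior w z /\ (vtx vs i).1 - eps < z.1.
Proof.
case=> _ [hu hv] eps he.
have hO := orthoV_sw (rc_orthoV hrc).
have e : (vtx vs i).1 = (vtx vs i.+1).1.
  by apply/eqP; rewrite eq_le (hu _ (vtx_w _)) (hv _ (vtx_w _)).
have e1 := adj_prev_v e; have e2 := adj_next_v e.
have hu' : (vtx vs (i + n.-1)).1 < (vtx vs i).1.
  rewrite lt_neqAle (hu _ (vtx_w _)) andbT; apply/eqP => e3.
  by apply: (@vtx_neqp i); apply: pair_eq.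
have hv' : (vtx vs i.+2).1 < (vtx vs i).1.
  rewrite e lt_neqAle (hv _ (vtx_w _)) andbT; apply/eqP => e3.
  by apply: (@vtx_neq1 i.+1); apply: pair_eq.
have hne : (vtx vs i).2 != (vtx vs i.+1).2.
  by apply/eqP => e3; apply: (@vtx_neq1 i); apply: pair_eq.
case: (ltgtP (vtx vs i).2 (vtx vs i.+1).2) hne => // hlt _.
- have [z [iz hz]] := @PRdown _ (fun x => w (sw x)) (sw (vtx vs i)) (sw (vtx vs (i + n.-1)))
    (sw (vtx vs i.+1)) (sw (vtx vs i.+2)) hO (esym e1) e2 e hlt (@seg_prev_ws i) (@seg_next_ws i) hu' hv' eps he.
  by exists (sw z); split => //; apply/int_swE.
- rewrite e; rewrite e in hu' hv'.
  have [z [iz hz]] := @PRdown _ (fun x => w (sw x)) (sw (vtx vs i.+1)) (sw (vtx vs i.+2))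
    (sw (vtx vs i)) (sw (vtx vs (i + n.-1))) hO e2 (esym e1) (esym e) hlt (@seg_next_ws i) (@seg_prev_ws i) hv' hu' eps he.
  by exists (sw z); split => //; apply/int_swE.
Qed.

Lemma ext_bet (x0 a x1 : R) : bet x0 a x1 ->
  (a <= x0 /\ a <= x1) \/ (x0 <= a /\ x1 <= a) -> a = x0 \/ a = x1.
Proof.
by case=> /andP [? ?]; case=> [[? ?]|[? ?]]; [left|right|right|left]; lra.
Qed.

Lemma on_poly_bd a : w a ->
  ((forall q, w q -> a.1 <= q.1) \/ (forall q, w q -> q.1 <= a.1)) ->
  on_polygon vs a.
Proof.
move=> ha hx; case: hob => _ [_ [_ [_ [_ hbd]]]]; apply/hbd => e he.
split; first by exists a; split => //; rewrite /ball !subrr expr2 mul0r addr0 exprn_gt0.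
have hq : (e / 2) ^+ 2 + 0 ^+ 2 < e ^+ 2.
  rewrite !expr2 mul0r addr0; have : e / 2 < e by rewrite ltr_pdivrMr //; lra.
  have : 0 < e / 2 by rewrite divr_gt0. nra.
case: hx => hx.
- exists (a.1 - e / 2, a.2); split.
    by rewrite /ball /= subrr addrAC subrr add0r sqrrN.
  move/hx => /=; have : 0 < e / 2 by rewrite divr_gt0. lra.
- exists (a.1 + e / 2, a.2); split.
    by rewrite /ball /= subrr addrAC subrr add0r.
  move/hx => /=; have : 0 < e / 2 by rewrite divr_gt0. lra.
Qed.

Lemma corner a (Px Py : pt R -> Prop) : w a ->
  (forall v, w v -> (Py v <-> v.2 = a.2)) -> (forall v, w v -> (Px v <-> v.1 = a.1)) ->
  ((forall q, w q -> a.1 <= q.1) \/ (forall q, w q -> q.1 <= a.1)) ->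
  ((forall q, w q -> a.2 <= q.2) \/ (forall q, w q -> q.2 <= a.2)) ->
  corner_of (side_edge Py vs) (side_edge Px vs) vs a.
Proof.
move=> ha hPy hPx hx hy.
case: (on_poly_bd ha hx) => k hk hek.
have hV0 := @vtx_w k; have hV1 := @vtx_w k.+1.
case: (rect_at k) => e.
-
  move/(seg_vP' _ e): hek => [ea hb].
  have : a.2 = (vtx vs k).2 \/ a.2 = (vtx vs k.+1).2.
    apply: ext_bet hb _; case: hy => hy; [left|right]; split; apply: hy => //.
  case=> e2.
  + have -> : a = vtx vs k by apply: pair_eq.
    split.
    * exists ((k + n.-1) %% n)%N; split; last by right; rewrite vtx_modS prevS.
      split; first by rewrite ltn_pmod // n0.
      rewrite vtx_mod vtx_modS prevS; split; apply/hPy => //; try exact: vtx_w.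
      by rewrite e2 (adj_prev_v e).
    * exists k; split; last by left.
      by split => //; split; apply/hPx => //; rewrite ea // e.
  + have -> : a = vtx vs k.+1 by apply: pair_eq => //; rewrite ea.
    split.
    * exists (k.+1 %% n)%N; split; last by left; rewrite vtx_mod.
      split; first by rewrite ltn_pmod // n0.
      rewrite vtx_mod vtx_modS; split; apply/hPy => //; try exact: vtx_w.
      by rewrite e2 (adj_next_v e).
    * exists k; split; last by right.
      by split => //; split; apply/hPx => //; rewrite ea // e.
-
  move/(seg_hP' _ e): hek => [ea hb].
  have : a.1 = (vtx vs k).1 \/ a.1 = (vtx vs k.+1).1.
    apply: ext_bet hb _; case: hx => hx; [left|right]; split; apply: hx => //.
  case=> e1.
  + have -> : a = vtx vs k by apply: pair_eq.
    split.
    * exists k; split; last by left.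
      by split => //; split; apply/hPy => //; rewrite ea // e.
    * exists ((k + n.-1) %% n)%N; split; last by right; rewrite vtx_modS prevS.
      split; first by rewrite ltn_pmod // n0.
      rewrite vtx_mod vtx_modS prevS; split; apply/hPx => //; try exact: vtx_w.
      by rewrite e1 (adj_prev_h e).
  + have -> : a = vtx vs k.+1 by apply: pair_eq => //; rewrite ea.
    split.
    * exists k; split; last by right.
      by split => //; split; apply/hPy => //; rewrite ea // e.
    * exists (k.+1 %% n)%N; split; last by left; rewrite vtx_mod.
      split; first by rewrite ltn_pmod // n0.
      rewrite vtx_mod vtx_modS; split; apply/hPx => //; try exact: vtx_w.
      by rewrite e1 (adj_next_h e).
Qed.

End Poly.

Local Open Scope ring_scope.

Section Geo6.
Variable R : realType.
Implicit Types (p q a b c x y z u : pt R) (w : region R).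

Lemma seg_lo2 a b x (r : R) : seg a b x -> r <= a.2 -> r <= b.2 -> r <= x.2.
Proof. case=> t [/andP [h0 h1] ->] /= ha hb; nra. Qed.
Lemma seg_hi2 a b x (r : R) : seg a b x -> a.2 <= r -> b.2 <= r -> x.2 <= r.
Proof. case=> t [/andP [h0 h1] ->] /= ha hb; nra. Qed.
Lemma seg_lo1 a b x (r : R) : seg a b x -> r <= a.1 -> r <= b.1 -> r <= x.1.
Proof. case=> t [/andP [h0 h1] ->] /= ha hb; nra. Qed.
Lemma seg_hi1 a b x (r : R) : seg a b x -> a.1 <= r -> b.1 <= r -> x.1 <= r.
Proof. case=> t [/andP [h0 h1] ->] /= ha hb; nra. Qed.

Lemma trace_c0 p q c : one_corner_path p q c ->
  (forall x, seg p (q.1, p.2) x \/ seg (q.1, p.2) q x -> oc_trace p q c x) \/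
  (forall x, seg q (p.1, q.2) x \/ seg (p.1, q.2) p x -> oc_trace p q c x).
Proof.
move=> hc; case: (oc_cases hc) => [->|[->|[[e [h2 hb]]|[e [h1 hb]]]]].
- by left => x /oc_traceE.
- right => x h; apply/oc_traceE; case: h => h; [right|left]; exact: seg_sym.
- left => x.
  have -> : (q.1, p.2) = q by rewrite e -surjective_pairing.
  case=> h; first exact: oc_alignH.
  by move/seg_pt: h => ->; apply/oc_traceE; right; exact: seg_r.
- left => x.
  have -> : (q.1, p.2) = p by rewrite -e -surjective_pairing.
  case=> h; last exact: oc_alignV.
  by move/seg_pt: h => ->; apply/oc_traceE; left; exact: seg_l.
Qed.

Lemma far_h w z : bounded w -> interior w z -> exists p q,
  [/\ p.2 = z.2, q.2 = z.2, ~ interior w p, ~ interior w q & seg p q z].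
Proof.
case=> M hM iz; have /hM [hz1 _] := int_in iz.
exists (- (M + 1), z.2), (M + 1, z.2); split => //.
- move/int_in/hM => [h _]; move: h; rewrite /= normrN.
  have := normr_ge0 (M + 1); have := ler_norm (M + 1); have := normr_ge0 z.1; lra.
- move/int_in/hM => [h _]; move: h; rewrite /=.
  have := normr_ge0 (M + 1); have := ler_norm (M + 1); have := normr_ge0 z.1; lra.
- apply/seg_hP' => //; split => //; left; apply/andP; split => /=;
  have h1 := ler_norm z.1; have h2 := ler_norm (- z.1); rewrite normrN in h2; lra.
Qed.

Lemma far_v w z : bounded w -> interior w z -> exists p q,
  [/\ p.1 = z.1, q.1 = z.1, ~ interior w p, ~ interior w q & seg p q z].
Proof.
case=> M hM iz; have /hM [_ hz2] := int_in iz.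
exists (z.1, - (M + 1)), (z.1, M + 1); split => //.
- move/int_in/hM => [_ h]; move: h; rewrite /= normrN.
  have := normr_ge0 (M + 1); have := ler_norm (M + 1); have := normr_ge0 z.2; lra.
- move/int_in/hM => [_ h]; move: h; rewrite /=.
  have := normr_ge0 (M + 1); have := ler_norm (M + 1); have := normr_ge0 z.2; lra.
- apply/seg_vP' => //; split => //; left; apply/andP; split => /=;
  have h1 := ler_norm z.2; have h2 := ler_norm (- z.2); rewrite normrN in h2; lra.
Qed.

Lemma skel_h w S z : skeleton w S -> bounded w -> interior w z ->
  exists s, s \in S /\ exists x, seg s.1 s.2 x /\ x.2 = z.2.
Proof.
case=> _ [_ hb] hbd iz.
have [p [q [e1 e2 np nq hz]]] := far_h hbd iz.
have epq : p.2 = q.2 by rewrite e1 e2.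
have hq : one_corner_path p q (q.1, p.2) by apply: oc_valid; left.
have := hb p q np nq _ _ hq.
case.
  by move=> c hc; exists z; split => //; apply: (oc_alignH epq hc).
move=> s [hs [x [hx hsx]]]; exists s; split => //; exists x; split => //.
case/oc_traceE: hx => hx.
- by move/(seg_hP' x (erefl _ : p.2 = (q.1, p.2).2)): hx => [-> _].
- by move/(seg_hP' x (epq : (q.1, p.2).2 = q.2)): hx => [-> _].
Qed.

Lemma skel_v w S z : skeleton w S -> bounded w -> interior w z ->
  exists s, s \in S /\ exists x, seg s.1 s.2 x /\ x.1 = z.1.
Proof.
case=> _ [_ hb] hbd iz.
have [p [q [e1 e2 np nq hz]]] := far_v hbd iz.
have epq : p.1 = q.1 by rewrite e1 e2.
have hq : one_corner_path p q (q.1, p.2) by apply: oc_valid; left.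
have := hb p q np nq _ _ hq.
case.
  by move=> c hc; exists z; split => //; apply: (oc_alignV epq hc).
move=> s [hs [x [hx hsx]]]; exists s; split => //; exists x; split => //.
case/oc_traceE: hx => hx.
- by move/(seg_vP' x (epq : p.1 = (q.1, p.2).1)): hx => [-> _].
- by move/(seg_vP' x (erefl _ : (q.1, p.2).1 = q.1)): hx => [-> _].
Qed.

Lemma low_end2 w (P1 P2 : pt R) (Y : R) : w P1 -> w P2 -> (forall q, w q -> Y <= q.2) ->
  (forall eps, 0 < eps -> exists z, interior w z /\ z.2 < Y + eps) ->
  (forall z, interior w z -> exists x, seg P1 P2 x /\ x.2 = z.2) ->
  P1.2 = Y \/ P2.2 = Y.
Proof.
move=> h1 h2 hY hn hs; apply: NNPP => hc.
have k1 : 0 < P1.2 - Y.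
  have hy := hY _ h1; have hne : P1.2 != Y by apply/eqP => e; apply: hc; left.
  rewrite subr_gt0 lt_neqAle eq_sym hne; exact: hy.
have k2 : 0 < P2.2 - Y.
  have hy := hY _ h2; have hne : P2.2 != Y by apply/eqP => e; apply: hc; right.
  rewrite subr_gt0 lt_neqAle eq_sym hne; exact: hy.
have [e he [he1 he2]] := pos2 k1 k2.
have [z [iz hz]] := hn e he.
have [x [hx ex]] := hs z iz.
have := seg_lo2 (r := Y + e) hx; lra.
Qed.

Lemma high_end2 w (P1 P2 : pt R) (Y : R) : w P1 -> w P2 -> (forall q, w q -> q.2 <= Y) ->
  (forall eps, 0 < eps -> exists z, interior w z /\ Y - eps < z.2) ->
  (forall z, interior w z -> exists x, seg P1 P2 x /\ x.2 = z.2) ->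
  P1.2 = Y \/ P2.2 = Y.
Proof.
move=> h1 h2 hY hn hs; apply: NNPP => hc.
have k1 : 0 < Y - P1.2.
  have hy := hY _ h1; have hne : P1.2 != Y by apply/eqP => e; apply: hc; left.
  rewrite subr_gt0 lt_neqAle hne; exact: hy.
have k2 : 0 < Y - P2.2.
  have hy := hY _ h2; have hne : P2.2 != Y by apply/eqP => e; apply: hc; right.
  rewrite subr_gt0 lt_neqAle hne; exact: hy.
have [e he [he1 he2]] := pos2 k1 k2.
have [z [iz hz]] := hn e he.
have [x [hx ex]] := hs z iz.
have := seg_hi2 (r := Y - e) hx; lra.
Qed.

Lemma low_end1 w (P1 P2 : pt R) (Y : R) : w P1 -> w P2 -> (forall q, w q -> Y <= q.1) ->
  (forall eps, 0 < eps -> exists z, interior w z /\ z.1 < Y + eps) ->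
  (forall z, interior w z -> exists x, seg P1 P2 x /\ x.1 = z.1) ->
  P1.1 = Y \/ P2.1 = Y.
Proof.
move=> h1 h2 hY hn hs; apply: NNPP => hc.
have k1 : 0 < P1.1 - Y.
  have hy := hY _ h1; have hne : P1.1 != Y by apply/eqP => e; apply: hc; left.
  rewrite subr_gt0 lt_neqAle eq_sym hne; exact: hy.
have k2 : 0 < P2.1 - Y.
  have hy := hY _ h2; have hne : P2.1 != Y by apply/eqP => e; apply: hc; right.
  rewrite subr_gt0 lt_neqAle eq_sym hne; exact: hy.
have [e he [he1 he2]] := pos2 k1 k2.
have [z [iz hz]] := hn e he.
have [x [hx ex]] := hs z iz.
have := seg_lo1 (r := Y + e) hx; lra.
Qed.

Lemma high_end1 w (P1 P2 : pt R) (Y : R) : w P1 -> w P2 -> (forall q, w q -> q.1 <= Y) ->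
  (forall eps, 0 < eps -> exists z, interior w z /\ Y - eps < z.1) ->
  (forall z, interior w z -> exists x, seg P1 P2 x /\ x.1 = z.1) ->
  P1.1 = Y \/ P2.1 = Y.
Proof.
move=> h1 h2 hY hn hs; apply: NNPP => hc.
have k1 : 0 < Y - P1.1.
  have hy := hY _ h1; have hne : P1.1 != Y by apply/eqP => e; apply: hc; left.
  rewrite subr_gt0 lt_neqAle hne; exact: hy.
have k2 : 0 < Y - P2.1.
  have hy := hY _ h2; have hne : P2.1 != Y by apply/eqP => e; apply: hc; right.
  rewrite subr_gt0 lt_neqAle hne; exact: hy.
have [e he [he1 he2]] := pos2 k1 k2.
have [z [iz hz]] := hn e he.
have [x [hx ex]] := hs z iz.
have := seg_hi1 (r := Y - e) hx; lra.
Qed.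

End Geo6.

Section Geo7.
Variable R : realType.
Implicit Types (p q a b c x y z u : pt R) (w : region R).

Lemma edge_miny w vs i x : side_edge (min_y w) vs i -> edge vs i x -> min_y w x.
Proof. case=> _ [h1 h2] hx q hq; exact: (seg_hi2 hx (h1 _ hq) (h2 _ hq)). Qed.
Lemma edge_maxy w vs i x : side_edge (max_y w) vs i -> edge vs i x -> max_y w x.
Proof. case=> _ [h1 h2] hx q hq; exact: (seg_lo2 hx (h1 _ hq) (h2 _ hq)). Qed.
Lemma edge_minx w vs i x : side_edge (min_x w) vs i -> edge vs i x -> min_x w x.
Proof. case=> _ [h1 h2] hx q hq; exact: (seg_hi1 hx (h1 _ hq) (h2 _ hq)). Qed.
Lemma edge_maxx w vs i x : side_edge (max_x w) vs i -> edge vs i x -> max_x w x.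
Proof. case=> _ [h1 h2] hx q hq; exact: (seg_lo1 hx (h1 _ hq) (h2 _ hq)). Qed.

Lemma iff_miny w A a : w A -> min_y w A -> a.2 = A.2 ->
  forall v, w v -> (min_y w v <-> v.2 = a.2).
Proof.
move=> wA hA e v wv; split.
- by move=> hv; rewrite e; apply/eqP; rewrite eq_le hv // hA.
- by move=> ev q hq; rewrite ev e; apply: hA.
Qed.
Lemma iff_maxy w A a : w A -> max_y w A -> a.2 = A.2 ->
  forall v, w v -> (max_y w v <-> v.2 = a.2).
Proof.
move=> wA hA e v wv; split.
- by move=> hv; rewrite e; apply/eqP; rewrite eq_le hv // hA.
- by move=> ev q hq; rewrite ev e; apply: hA.
Qed.
Lemma iff_minx w A a : w A -> min_x w A -> a.1 = A.1 ->
  forall v, w v -> (min_x w v <-> v.1 = a.1).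
Proof.
move=> wA hA e v wv; split.
- by move=> hv; rewrite e; apply/eqP; rewrite eq_le hv // hA.
- by move=> ev q hq; rewrite ev e; apply: hA.
Qed.
Lemma iff_maxx w A a : w A -> max_x w A -> a.1 = A.1 ->
  forall v, w v -> (max_x w v <-> v.1 = a.1).
Proof.
move=> wA hA e v wv; split.
- by move=> hv; rewrite e; apply/eqP; rewrite eq_le hv // hA.
- by move=> ev q hq; rewrite ev e; apply: hA.
Qed.

End Geo7.

Theorem lemma6 (R : realType) (w : region R) (vs : seq (pt R)) :
  obstacle w vs -> rectilinear vs -> rect_convex w -> ~ has_diagonal w vs ->
  forall sH sV : pt R * pt R, is_cross w vs sH sV ->
    min_skeleton w [:: sH; sV].
Proof.
move=> hob hrect hrc hnd sH sV [hsH [hsV [jH jV]]].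
have hOH := rc_orthoH hrc; have hOV := rc_orthoV hrc.
have hbd : bounded w by case: hob => _ [_ [_ [? _]]].
have [z0 iz0] : exists z, interior w z by case: hob => _ [_ [_ [_ [? _]]]].
case: jH => iB [iT [hiB [hiT heH]]].
case: jV => iL [iR [hiL [hiR heV]]].
have [A [B [eAB [hA [hB [wA wB]]]]]] : exists A B, (sH = (A, B) \/ sH = (B, A)) /\
    min_y w A /\ max_y w B /\ w A /\ w B.
  case: heH => [[h1 h2]|[h1 h2]].
  - exists sH.1, sH.2; split; first by left; rewrite -surjective_pairing.
    split; first exact: (edge_miny hiB h1).
    split; first exact: (edge_maxy hiT h2).
    by split; [exact: (edge_w hob h1) | exact: (edge_w hob h2)].
  - exists sH.2, sH.1; split; first by right; rewrite -surjective_pairing.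
    split; first exact: (edge_miny hiB h1).
    split; first exact: (edge_maxy hiT h2).
    by split; [exact: (edge_w hob h1) | exact: (edge_w hob h2)].
have [C [D [eCD [hC [hD [wC wD]]]]]] : exists C D, (sV = (C, D) \/ sV = (D, C)) /\
    min_x w C /\ max_x w D /\ w C /\ w D.
  case: heV => [[h1 h2]|[h1 h2]].
  - exists sV.1, sV.2; split; first by left; rewrite -surjective_pairing.
    split; first exact: (edge_minx hiL h1).
    split; first exact: (edge_maxx hiR h2).
    by split; [exact: (edge_w hob h1) | exact: (edge_w hob h2)].
  - exists sV.2, sV.1; split; first by right; rewrite -surjective_pairing.
    split; first exact: (edge_minx hiL h1).
    split; first exact: (edge_maxx hiR h2).
    by split; [exact: (edge_w hob h1) | exact: (edge_w hob h2)].
have segH : forall x, seg sH.1 sH.2 x <-> seg A B x.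
  by move=> x; case: eAB => -> /=; split => //; apply: seg_sym.
have segV : forall x, seg sV.1 sV.2 x <-> seg C D x.
  by move=> x; case: eCD => -> /=; split => //; apply: seg_sym.
have hAB : forall x, seg A B x -> w x by move=> x /segH; apply: hsH.
have hCD : forall x, seg C D x -> w x by move=> x /segV; apply: hsV.
have [e0 he0 [k1 k2 k3 k4]] := int_nb iz0.
have hAB2 : A.2 < B.2.
  have := hA _ k2; have := hB _ k1; rewrite /=; lra.
have hCD1 : C.1 < D.1.
  have := hC _ k4; have := hD _ k3; rewrite /=; lra.
have hbdy : forall q, w q -> A.2 <= q.2 <= B.2.
  by move=> q hq; apply/andP; split; [apply: hA | apply: hB].
have hbdx : forall q, w q -> C.1 <= q.1 <= D.1.
  by move=> q hq; apply/andP; split; [apply: hC | apply: hD].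
split.
- split.
    move=> s; rewrite !inE => /orP [] /eqP ->.
    + by case: eAB => -> /= e; move: hAB2; rewrite e ltxx.
    + by case: eCD => -> /= e; move: hCD1; rewrite e ltxx.
  split.
    by move=> s; rewrite !inE => /orP [] /eqP ->.
  move=> p q np nq hblk c hc.
  apply: NNPP => hno.
  have hav : forall x, oc_trace p q c x -> ~ seg A B x /\ ~ seg C D x.
    move=> x hx; split => hs; apply: hno.
    - exists sH; split; first by rewrite inE eqxx.
      by exists x; split => //; apply/segH.
    - exists sV; split; first by rewrite !inE eqxx orbT.
      by exists x; split => //; apply/segV.
  have [z [hz iz]] := hblk _ (oc_valid (or_introl erefl) : one_corner_path p q (q.1, p.2)).
  have [z' [hz' iz']] := hblk _ (oc_valid (or_intror erefl) : one_corner_path p q (p.1, q.2)).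
  move/oc_traceE in hz; move/oc_traceE in hz'.
  case: (trace_c0 hc) => htr.
  + apply: (core hOH hOV hAB hCD hAB2 hCD1 hbdy hbdx np nq _
       (ex_intro _ z (conj hz iz)) (ex_intro _ z' (conj hz' iz'))).
    by move=> x /htr /hav.
  + apply: (core hOH hOV hAB hCD hAB2 hCD1 hbdy hbdx nq np).
    * by move=> x /htr /hav.
    * exists z'; split => //; case: hz' => h; [right|left]; exact: seg_sym.
    * exists z; split => //; case: hz => h; [right|left]; exact: seg_sym.
- move=> S hS.
  have diag_of : forall a b, w a -> w b -> (forall x, seg a b x -> w x) ->
      ((a.1 = C.1 /\ a.2 = A.2 /\ b.1 = D.1 /\ b.2 = B.2) \/
       (a.1 = C.1 /\ a.2 = B.2 /\ b.1 = D.1 /\ b.2 = A.2)) -> False.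
    move=> a b wa wb hab [[e1 [e2 [e3 e4]]]|[e1 [e2 [e3 e4]]]]; apply: hnd; exists a, b;
      split => //.
    + left; split.
      * apply: (@corner _ w vs hob hrect a (min_x w) (min_y w) wa).
        - exact: (iff_miny wA hA e2).
        - exact: (iff_minx wC hC e1).
        - by left => q hq; rewrite e1; apply: hC.
        - by left => q hq; rewrite e2; apply: hA.
      * apply: (@corner _ w vs hob hrect b (max_x w) (max_y w) wb).
        - exact: (iff_maxy wB hB e4).
        - exact: (iff_maxx wD hD e3).
        - by right => q hq; rewrite e3; apply: hD.
        - by right => q hq; rewrite e4; apply: hB.
    + right; split.
      * apply: (@corner _ w vs hob hrect a (min_x w) (max_y w) wa).
        - exact: (iff_maxy wB hB e2).
        - exact: (iff_minx wC hC e1).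
        - by left => q hq; rewrite e1; apply: hC.
        - by right => q hq; rewrite e2; apply: hB.
      * apply: (@corner _ w vs hob hrect b (max_x w) (min_y w) wb).
        - exact: (iff_miny wA hA e4).
        - exact: (iff_maxx wD hD e3).
        - by right => q hq; rewrite e3; apply: hD.
        - by left => q hq; rewrite e4; apply: hA.
  case: S hS => [|s [|s' t]] hS //; exfalso.
  + by have [s [hs _]] := skel_h hS hbd iz0; rewrite in_nil in hs.
  + have hin : forall x, seg s.1 s.2 x -> w x.
      by case: hS => _ [hi _]; apply: hi; rewrite inE.
    have hin' : forall x, seg s.2 s.1 x -> w x by move=> x /seg_sym; apply: hin.
    have w1 : w s.1 := hin _ (seg_l _ _).
    have w2 : w s.2 := hin _ (seg_r _ _).
    have hsh : forall z, interior w z -> exists x, seg s.1 s.2 x /\ x.2 = z.2.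
      by move=> z iz; have [s0 [hs0 hx]] := skel_h hS hbd iz; move: hs0; rewrite inE => /eqP <-.
    have hsv : forall z, interior w z -> exists x, seg s.1 s.2 x /\ x.1 = z.1.
      by move=> z iz; have [s0 [hs0 hx]] := skel_v hS hbd iz; move: hs0; rewrite inE => /eqP <-.
    have eB : (vtx vs iB).2 = A.2.
      by case: hiB => _ [h _]; apply/eqP; rewrite eq_le (h _ wA) (hA _ (vtx_w hob _)).
    have eT : (vtx vs iT).2 = B.2.
      by case: hiT => _ [h _]; apply/eqP; rewrite eq_le (h _ wB) (hB _ (vtx_w hob _)).
    have eL : (vtx vs iL).1 = C.1.
      by case: hiL => _ [h _]; apply/eqP; rewrite eq_le (h _ wC) (hC _ (vtx_w hob _)).
    have eR : (vtx vs iR).1 = D.1.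
      by case: hiR => _ [h _]; apply/eqP; rewrite eq_le (h _ wD) (hD _ (vtx_w hob _)).
    have h1 : s.1.2 = A.2 \/ s.2.2 = A.2.
      apply: (low_end2 w1 w2 hA _ hsh) => eps he.
      rewrite -eB; exact: (bottom_near hob hrect hrc hiB he).
    have h2 : s.1.2 = B.2 \/ s.2.2 = B.2.
      apply: (high_end2 w1 w2 hB _ hsh) => eps he.
      rewrite -eT; exact: (top_near hob hrect hrc hiT he).
    have h3 : s.1.1 = C.1 \/ s.2.1 = C.1.
      apply: (low_end1 w1 w2 hC _ hsv) => eps he.
      rewrite -eL; exact: (left_near hob hrect hrc hiL he).
    have h4 : s.1.1 = D.1 \/ s.2.1 = D.1.
      apply: (high_end1 w1 w2 hD _ hsv) => eps he.
      rewrite -eR; exact: (right_near hob hrect hrc hiR he).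
    case: h1 => h1; case: h2 => h2; try (by move: hAB2; rewrite -h1 -h2 ltxx);
    case: h3 => h3; case: h4 => h4; try (by move: hCD1; rewrite -h3 -h4 ltxx).
    * by apply: (diag_of _ _ w1 w2 hin); left.
    * by apply: (diag_of _ _ w2 w1 hin'); right.
    * by apply: (diag_of _ _ w1 w2 hin); right.
    * by apply: (diag_of _ _ w2 w1 hin'); left.
Qed.
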